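(* Let $r\ge2$ be an integer. If a sequence of positive integers $A$ satisfies $A(n)\le\frac{r-1}{140}(\log_2 n)^2$ for all sufficiently large $n$, then $A$ is not $r$-Ramsey complete.
   Context: $A(n)=|A\cap[n]|$ is the number of terms of $A$ that are at most $n$. For a sequence $S$ of positive integers, $\Sigma(S)$ is the set of sums of distinct terms of $S$. A sequence $A$ is $r$-Ramsey complete if, whenever $A$ is partitioned into $r$ classes $A_1,\dots,A_r$, every sufficiently large positive integer lies in $\bigcup_{i}\Sigma(A_i)$. *)

(* Defs.v *)
From mathcomp Require Import all_boot.
From Stdlib Require Import Reals.

Set Implicit Arguments.
Unset Strict Implicit.
Unset Printing Implicit Defensive.

(* A sequence of positive integers is modelled as the set of its terms,
   a boolean predicate A : pred nat with all elements positive. *)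
Definition pos_seq (A : pred nat) : Prop := forall a, A a -> 0 < a.

Definition counting (A : pred nat) (n : nat) : nat := count A (iota 1 n).

Definition subset_sums (S : pred nat) (m : nat) : Prop :=
  exists s : seq nat, [/\ uniq s, all S s & sumn s = m].

(* A partition of A into r classes is given by a colouring c : nat -> 'I_r;
   class i is A_i = {a in A | c a = i}. *)
Definition color_class (A : pred nat) (r : nat) (c : nat -> 'I_r) (i : 'I_r)
  : pred nat := [pred a | A a && (c a == i)].

Definition ramsey_complete (r : nat) (A : pred nat) : Prop :=
  forall c : nat -> 'I_r, exists N : nat, forall m : nat, N <= m ->
    exists i : 'I_r, subset_sums (color_class A c i) m.

Definition log2 (x : R) : R := (ln x / ln 2)%R.

(* Main.v *)
Require Import Defs.
From mathcomp Require Import all_boot.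
From mathcomp Require Import zify.
From Stdlib Require Import Reals Lra Classical IndefiniteDescription.
From mathcomp Require Import ssrnat.
Set Implicit Arguments.
Unset Strict Implicit.
Unset Printing Implicit Defensive.
Fixpoint sums (t : seq nat) : seq nat :=
  match t with
  | [::] => [:: 0]
  | a :: t' => sums t' ++ map (addn a) (sums t')
  end.

Definition cnt (t : seq nat) (Y : nat) := count (fun x => x <= Y) (sums t).

Lemma sumn_filter_in (P : pred nat) t : sumn (filter P t) \in sums t.
Proof.
elim: t => [|a t IH] /=; first by rewrite inE.
rewrite mem_cat; case: (P a) => /=.
  by apply/orP; right; apply/mapP; exists (sumn (filter P t)).
by rewrite IH.
Qed.

Lemma sumn_filter_le (P : pred nat) t : sumn (filter P t) <= sumn t.
Proof.
elim: t => [|a t IH] //=; case: (P a) => /=; lia.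
Qed.

Lemma sumn_perm s1 s2 : perm_eq s1 s2 -> sumn s1 = sumn s2.
Proof.
move=> /permP H. 
rewrite !sumnE. by apply: (perm_big _ ); apply/permP.
Qed.

Lemma sumn_sub s t : uniq s -> uniq t -> {subset s <= t} -> sumn s <= sumn t.
Proof.
move=> us ut sub.
have pe : perm_eq s (filter (mem s) t).
  apply: uniq_perm => //; first exact: filter_uniq.
  move=> x; rewrite mem_filter; apply/idP/andP => [xs|[]//]; split=> //; exact: sub.
by rewrite (sumn_perm pe) sumn_filter_le.
Qed.

Lemma sumn_sub_sums s t : uniq s -> uniq t -> {subset s <= t} -> sumn s \in sums t.
Proof.
move=> us ut sub.
have pe : perm_eq s (filter (mem s) t).
  apply: uniq_perm => //; first exact: filter_uniq.
  move=> x; rewrite mem_filter; apply/idP/andP => [xs|[]//]; split=> //; exact: sub.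
by rewrite (sumn_perm pe) sumn_filter_in.
Qed.

Lemma sumn_split (P : pred nat) s : sumn s = sumn (filter P s) + sumn (filter (predC P) s).
Proof. elim: s => [|a s IH] //=; case: (P a) => /=; lia. Qed.

Lemma mem_le_sumn a s : a \in s -> a <= sumn s.
Proof. elim: s => [|b s IH] //=; rewrite inE => /orP [/eqP->|/IH]; lia. Qed.

Lemma sumn_filter_bound (P : pred nat) s M : all (fun a => a <= M) s -> sumn (filter P s) <= count P s * M.
Proof.
elim: s => [|a s IH] //= /andP [aM /IH]; case: (P a) => /=; nia.
Qed.

Lemma divn_add_le m n d : m %/ d + n %/ d <= (m + n) %/ d.
Proof.
case: d => [|d]; first by rewrite !divn0.
by rewrite divnD // leq_addr.
Qed.

Lemma count_map_add a t Y :
  count (fun x => x <= Y) (map (addn a) t) = if a <= Y then count (fun x => x <= Y - a) t else 0.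
Proof.
rewrite count_map; case: ifP => aY.
  by apply: eq_count => x /=; apply/idP/idP; lia.
by apply/eqP; rewrite -leqn0 leqNgt -has_count; apply/hasP => -[x _ /=]; lia.
Qed.

Lemma rankin D t Y :
  cnt t Y * \prod_(a <- t) 2 ^ (a %/ D) <= 2 ^ (Y %/ D) * \prod_(a <- t) (2 ^ (a %/ D) + 1).
Proof.
elim: t Y => [|a t IH] Y; first by rewrite /cnt /= !big_nil; case: (0 <= Y); rewrite /= ?muln1 expn_gt0.
rewrite /cnt /= count_cat count_map_add !big_cons.
set P2 := \prod_(a <- t) _. set P1 := \prod_(a <- t) _.
have H1 := IH Y. rewrite /cnt in H1.
case: ifP => aY.
  have H2 := IH (Y - a). rewrite /cnt in H2.
  have hd : (Y - a) %/ D + a %/ D <= Y %/ D.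
    by have := divn_add_le (Y - a) a D; rewrite subnK.
  have e1 : 2 ^ ((Y - a) %/ D) * 2 ^ (a %/ D) <= 2 ^ (Y %/ D) by rewrite -expnD leq_pexp2l.
  rewrite mulnDl.
  have -> : count (fun x => x <= Y) (sums t) * (2 ^ (a %/ D) * P2) = 2 ^ (a %/ D) * (count (fun x => x <= Y) (sums t) * P2) by rewrite mulnCA.
  have -> : count (fun x => x <= Y - a) (sums t) * (2 ^ (a %/ D) * P2) = 2 ^ (a %/ D) * (count (fun x => x <= Y - a) (sums t) * P2) by rewrite mulnCA.
  have -> : 2 ^ (Y %/ D) * ((2 ^ (a %/ D) + 1) * P1) = 2 ^ (a %/ D) * (2 ^ (Y %/ D) * P1) + 2 ^ (Y %/ D) * P1 by rewrite mulnDl mul1n mulnDr mulnCA.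
  apply: leq_add; first by rewrite leq_mul2l H1 orbT.
  apply: (leq_trans (leq_mul (leqnn _) H2)).
  rewrite mulnA; apply: leq_mul => //; by rewrite mulnC.
rewrite addn0.
have -> : count (fun x => x <= Y) (sums t) * (2 ^ (a %/ D) * P2) = 2 ^ (a %/ D) * (count (fun x => x <= Y) (sums t) * P2) by rewrite mulnCA.
apply: (leq_trans (leq_mul (leqnn _) H1)).
rewrite mulnCA leq_mul2l; apply/orP; right; apply: leq_mul => //; lia.
Qed.

Lemma keyK N k : k <= N -> (N + 1) ^ k * (N - k) <= N ^ k.+1.
Proof.
elim: k => [|k IH] kN; first by rewrite expn0 mul1n subn0 expn1.
have IH' := IH (ltnW kN).
rewrite expnS.
have e : (N + 1) * (N - k.+1) <= N * (N - k) by nia.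
rewrite -mulnA mulnCA.
apply: (leq_trans (leq_mul (leqnn _) e)).
rewrite mulnCA [N ^ k.+2]expnS leq_mul2l IH' orbT //.
Qed.

Lemma keyK2 N k : 2 * k <= N -> (N + 1) ^ k <= 2 * N ^ k.
Proof.
move=> kN.
have h := keyK (N:=N) (k:=k) ltac:(lia).
have Npos : 0 < N \/ N = 0 by lia.
case: Npos => [Np|N0]; last by subst N; have -> : k = 0 by lia.
rewrite -(leq_pmul2r Np).
apply: (leq_trans _ (_ : 2 * ((N + 1) ^ k * (N - k)) <= _)).
  set X := (N + 1) ^ k. nia.
rewrite expnSr in h. set X := (N + 1) ^ k in h *. nia.
Qed.

Lemma keyK3 N k n : 0 < k -> 2 * k <= N -> (N + 1) ^ n <= 2 ^ (n %/ k + 1) * N ^ n.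
Proof.
move=> k0 kN.
elim: n {-2}n (leqnn n) => [|m IH] n nm.
  have -> : n = 0 by lia. by rewrite !expn0 div0n.
case: (ltnP n k) => nk.
  rewrite divn_small // add0n expn1; apply: keyK2; lia.
have -> : n = k + (n - k) by lia.
rewrite expnD.
have h1 := keyK2 (N:=N) (k:=k) kN.
have h2 := IH (n - k) ltac:(lia).
have -> : (k + (n - k)) %/ k = (n - k) %/ k + 1.
  by rewrite addnC -{2}(mul1n k) divnDMl // addn1.
apply: (leq_trans (leq_mul h1 h2)).
rewrite expnD [in X in _ <= X]expnD !expnS expn0 !muln1 expnD (expnD N k) expn1.
set a := N ^ k. set b := N ^ (n - k). set c := 2 ^ ((n - k) %/ k). nia.
Qed.

Lemma prod_mono (D v : nat) (s : seq nat) : (forall a, a \in s -> v <= a %/ D) ->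
  \prod_(a <- s) (2 ^ (a %/ D) + 1) * (2 ^ v) ^ (size s) <= (2 ^ v + 1) ^ (size s) * \prod_(a <- s) 2 ^ (a %/ D).
Proof.
elim: s => [|a s IH] hs; first by rewrite !big_nil.
rewrite !big_cons /= !expnS.
have ha : v <= a %/ D by apply: hs; rewrite inE eqxx.
have IH' := IH (fun b bs => hs b (@mem_behead _ (a :: s) _ bs)).
have e : (2 ^ (a %/ D) + 1) * 2 ^ v <= (2 ^ v + 1) * 2 ^ (a %/ D).
  rewrite mulnDl mulnDl mul1n mul1n mulnC leq_add2l leq_pexp2l //.
set Pa := \prod_(a <- s) _. set Pb := \prod_(a <- s) _.
set X := (2^v) ^ size s. set Y := (2^v + 1) ^ size s.
have -> : (2 ^ (a %/ D) + 1) * Pa * (2 ^ v * X) = ((2 ^ (a %/ D) + 1) * 2 ^ v) * (Pa * X).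
  by rewrite -!mulnA (mulnCA Pa).
have -> : (2 ^ v + 1) * Y * (2 ^ (a %/ D) * Pb) = ((2 ^ v + 1) * 2 ^ (a %/ D)) * (Y * Pb).
  by rewrite -!mulnA (mulnCA Y).
exact: leq_mul.
Qed.

Lemma prod_chunk (D v : nat) (s : seq nat) : 0 < v -> (forall a, a \in s -> v <= a %/ D) ->
  \prod_(a <- s) (2 ^ (a %/ D) + 1) <= 2 ^ (size s %/ 2 ^ v.-1 + 1) * \prod_(a <- s) 2 ^ (a %/ D).
Proof.
move=> v0 hs.
have h1 := prod_mono hs.
have h2 := keyK3 (N := 2 ^ v) (k := 2 ^ v.-1) (size s) (expn_gt0 _ _) ltac:(rewrite -expnS prednK //).
have pos : 0 < (2 ^ v) ^ size s by rewrite expn_gt0 expn_gt0.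
rewrite -(leq_pmul2r pos).
apply: (leq_trans h1).
rewrite mulnAC leq_mul2r h2 orbT //.
Qed.

Lemma F_formula q j x : j < q ->
  count (fun z => z %% q == j) (iota 0 x) = x %/ q + (j < x %% q).
Proof.
move=> jq.
have q0 : 0 < q by lia.
elim: x => [|x IH]; first by rewrite /= div0n mod0n.
rewrite -addn1 iotaD count_cat IH /= add0n addn0 addn1.
rewrite modnS divnS //.
have e1 := divn_eq x q. have e2 := ltn_pmod x q0.
case: ifP => dv.
  have e3 : x.+1 = x.+1 %/ q * q := esym (divnK dv).
  have hx : x %% q = q.-1.
    set Q := x %/ q in e1. set R := x %% q in e1 e2 *. set Q' := x.+1 %/ q in e3.
    have h : q * (Q' - Q) = R + 1 by nia.
    have : Q' - Q = 1.
      by case E: (Q' - Q) => [|[|k]]; rewrite E in h; nia.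
    nia.
  rewrite hx. 
  have -> : (j < 0) = false by lia.
  have : (j < q.-1) + (q.-1 == j) = 1.
    case: (ltnP j q.-1) => h; case: eqP => h'; rewrite /=; lia.
  have ht : nat_of_bool true = 1 := erefl. have hf : nat_of_bool false = 0 := erefl.
  rewrite ht hf. move: (j < q.-1) (q.-1 == j) => [] []; rewrite /=; lia.
have hf : nat_of_bool false = 0 := erefl. rewrite hf.
case: (ltngtP (x %% q) j) => h; rewrite /=; lia.
Qed.

Lemma res_count q j s n : 0 < q -> q * count (fun z => z %% q == j) (iota s n) <= n + 2 * q.
Proof.
move=> q0.
case: (ltnP j q) => jq; last first.
  have -> : count (fun z => z %% q == j) (iota s n) = 0.
    apply/eqP; rewrite -leqn0 leqNgt -has_count; apply/hasP => -[z _ /eqP hz].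
    have := ltn_pmod z q0; lia.
  lia.
have h : count (fun z => z %% q == j) (iota s n) =
   count (fun z => z %% q == j) (iota 0 (s + n)) - count (fun z => z %% q == j) (iota 0 s).
  by rewrite iotaD count_cat add0n addKn.
rewrite h !F_formula //.
have e1 := divn_eq (s + n) q. have e2 := divn_eq s q.
have e3 := ltn_pmod (s + n) q0. have e4 := ltn_pmod s q0.
set Q1 := (s + n) %/ q in e1 *. set Q2 := s %/ q in e2 *.
set R1 := (s + n) %% q in e1 e3 *. set R2 := s %% q in e2 e4 *.
set b1 := (j < R1). set b2 := (j < R2).
have hb1 : b1 <= 1 by case: b1. have hb2 : b2 <= 1 by case: b2.
nia.
Qed.

Section WithA.
Variable A : pred nat.

Definition fA l := counting A (2 ^ l).
Definition lev l := iota (2 ^ l).+1 (2 ^ l).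
Definition dA l := if l is l'.+1 then count A (lev l') else fA 0.
Definition rank a := counting A a.

Lemma fA_S l : fA l.+1 = fA l + dA l.+1.
Proof. by rewrite /fA /counting expnS mul2n -addnn iotaD count_cat add1n. Qed.

Lemma fA_0 : fA 0 = dA 0.
Proof. by []. Qed.

Lemma rank_add x k : rank (x + k) = rank x + count A (iota x.+1 k).
Proof. by rewrite /rank /counting iotaD count_cat add1n. Qed.

Lemma map_rank x n :
  map rank (filter A (iota x.+1 n)) = iota (rank x).+1 (count A (iota x.+1 n)).
Proof.
elim: n => [|n IH] //.
rewrite -[n.+1]addn1 !iotaD filter_cat map_cat IH count_cat /=.
case Ha: (A (x.+1 + n)) => /=; last by rewrite !addn0 cats0.
rewrite addn0 iotaD /=.
congr (_ ++ [:: _]).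
have -> : x.+1 + n = x + n.+1 by lia.
rewrite rank_add -[n.+1]addn1 iotaD count_cat /= Ha /=; lia.
Qed.

Lemma level_count q j x n : 0 < q ->
  q * count (fun a => A a && (rank a %% q == j)) (iota x.+1 n) <= count A (iota x.+1 n) + 2 * q.
Proof.
move=> q0.
have -> : count (fun a => A a && (rank a %% q == j)) (iota x.+1 n)
   = count (fun z => z %% q == j) (map rank (filter A (iota x.+1 n))).
  by rewrite count_map count_filter; apply: eq_count => a /=; rewrite andbC.
rewrite map_rank. apply: res_count q0.
Qed.

End WithA.

Section WithA2.
Variable A : pred nat.

Definition PW H := \sum_(l < H.+1) dA A l * 2 ^ l.

Lemma iota_pow_split H : iota 1 (2 ^ H.+1) = iota 1 (2 ^ H) ++ lev H.
Proof. by rewrite expnS mul2n -addnn iotaD add1n. Qed.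

Lemma lev_le H a : a \in lev H -> 2 ^ H < a <= 2 ^ H.+1.
Proof. rewrite mem_iota expnS; lia. Qed.

Lemma sum_pow_lt H : \sum_(l < H.+1) 2 ^ l < 2 ^ H.+1.
Proof.
elim: H => [|H IH]; first by rewrite big_ord1.
rewrite big_ord_recr /= (eq_bigr (fun i : 'I_H.+1 => 2 ^ i)) // [2 ^ H.+2]expnS.
move: IH; set S := \sum_(i < H.+1) 2 ^ i; lia.
Qed.

Lemma window_sum k0 i H : 0 < k0 ->
  k0 * sumn (filter (fun a => A a && (rank A a %% k0 == i)) (iota 1 (2 ^ H)))
    <= PW H + 4 * k0 * 2 ^ H.
Proof.
move=> k0p.
suff h : k0 * sumn (filter (fun a => A a && (rank A a %% k0 == i)) (iota 1 (2 ^ H)))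
    <= \sum_(l < H.+1) (dA A l + 2 * k0) * 2 ^ l.
  apply: (leq_trans h).
  rewrite /PW (eq_bigr (fun l : 'I_H.+1 => dA A l * 2 ^ l + 2 * k0 * 2 ^ l)); last by move=> l _; rewrite mulnDl.
  rewrite big_split /= -big_distrr /=.
  have := sum_pow_lt H. rewrite expnS.
  set S1 := \sum_(l < H.+1) 2 ^ l. set S2 := \sum_(l < H.+1) dA A l * 2 ^ l.
  move=> hS. nia.
elim: H => [|H IH].
  rewrite big_ord1 /= expn0 muln1.
  case: (A 1 && _) => /=; nia.
rewrite iota_pow_split filter_cat sumn_cat big_ord_recr /= mulnDr.
apply: leq_add; first exact: IH.
set P := (fun a => A a && (rank A a %% k0 == i)).
have h1 : sumn (filter P (lev H)) <= count P (lev H) * 2 ^ H.+1.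
  apply: sumn_filter_bound; apply/allP => a /lev_le; lia.
have h2 : k0 * count P (lev H) <= dA A H.+1 + 2 * k0.
  by rewrite /lev /dA; apply: level_count.
change (dA A H.+1) with (count A (lev H)) in h2.
set X := 2 ^ H.+1 in h1 *. set S := sumn _ in h1 *. set c := count P _ in h1 h2 *.
set d := count A _ in h2 *.
apply: (leq_trans (leq_mul (leqnn k0) h1)). rewrite mulnA. exact: leq_mul.
Qed.

End WithA2.

Section WithA3.
Variable A : pred nat.
Variable q : nat.

Definition Tl j H t := filter (fun a => A a && (rank A a %% q == j)) (lev (H + t)).
Fixpoint Tj j H u := if u is u'.+1 then Tj j H u' ++ Tl j H u' else [::].
Fixpoint Ep j H u := if u is u'.+1 then Ep j H u' + (size (Tl j H u') %/ 2 ^ u' + 1) else 0.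

Lemma mem_Tj j H u a :
  (a \in Tj j H u) = [&& 2 ^ H < a, a <= 2 ^ (H + u), A a & rank A a %% q == j].
Proof.
elim: u => [|u IH] /=.
  rewrite addn0 in_nil; apply/esym/negbTE; apply/and4P => -[]; lia.
rewrite mem_cat IH /Tl mem_filter mem_iota.
have hp : 2 ^ H <= 2 ^ (H + u) by rewrite leq_pexp2l // leq_addr.
have hp2 : 2 ^ (H + u.+1) = 2 ^ (H + u) + 2 ^ (H + u) by rewrite addnS expnS mul2n addnn.
rewrite hp2.
case: (A a); case: (rank A a %% q == j); rewrite /= ?andbF ?andbT //; lia.
Qed.

Lemma uniq_Tj j H u : uniq (Tj j H u).
Proof.
elim: u => [|u IH] //=.
rewrite cat_uniq IH /= filter_uniq ?iota_uniq // andbT.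
apply/hasPn => a; rewrite /Tl mem_filter mem_iota => /andP [_ ha].
rewrite mem_Tj; lia.
Qed.

Lemma prod_Tj j H u :
  \prod_(a <- Tj j H u) (2 ^ (a %/ 2 ^ H) + 1) <= 2 ^ (Ep j H u) * \prod_(a <- Tj j H u) 2 ^ (a %/ 2 ^ H).
Proof.
elim: u => [|u IH]; first by rewrite /= !big_nil.
rewrite /= !big_cat /=.
have hc : \prod_(a <- Tl j H u) (2 ^ (a %/ 2 ^ H) + 1)
           <= 2 ^ (size (Tl j H u) %/ 2 ^ u + 1) * \prod_(a <- Tl j H u) 2 ^ (a %/ 2 ^ H).
  have := @prod_chunk (2 ^ H) u.+1 (Tl j H u) erefl.
  apply => a; rewrite /Tl mem_filter mem_iota => /andP [_ ha].
  have h1 : 2 ^ (H + u) %/ 2 ^ H <= a %/ 2 ^ H by apply: leq_div2r; lia.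
  rewrite expnD mulKn ?expn_gt0 // in h1.
  apply: leq_trans h1; exact: ltn_expl.
rewrite expnD.
set a1 := \prod_(a <- Tj j H u) (2 ^ (a %/ 2 ^ H) + 1) in IH *.
set a2 := \prod_(a <- Tj j H u) 2 ^ (a %/ 2 ^ H) in IH *.
set b1 := \prod_(a <- Tl j H u) (2 ^ (a %/ 2 ^ H) + 1) in hc *.
set b2 := \prod_(a <- Tl j H u) 2 ^ (a %/ 2 ^ H) in hc *.
apply: (leq_trans (leq_mul IH hc)).
by rewrite -!mulnA leq_mul2l (mulnCA a2) leqnn orbT.
Qed.

Lemma cnt_Tj j H u : cnt (Tj j H u) (2 ^ (H + u)) <= 2 ^ (2 ^ u + Ep j H u).
Proof.
have h := rankin (2 ^ H) (Tj j H u) (2 ^ (H + u)).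
have hp := prod_Tj j H u.
have e : 2 ^ (H + u) %/ 2 ^ H = 2 ^ u by rewrite expnD mulKn ?expn_gt0.
rewrite e in h.
set P2 := \prod_(a <- Tj j H u) 2 ^ (a %/ 2 ^ H) in h hp.
have P2pos : 0 < P2 by rewrite /P2; elim: (Tj j H u) => [|b s IHs]; rewrite ?big_nil ?big_cons // muln_gt0 expn_gt0 IHs.
rewrite -(leq_pmul2r P2pos).
apply: (leq_trans h).
rewrite expnD -mulnA leq_mul2l hp orbT //.
Qed.

Lemma size_Tl j H t : 0 < q -> q * size (Tl j H t) <= dA A (H + t).+1 + 2 * q.
Proof. by move=> q0; rewrite /Tl size_filter /dA /lev; apply: level_count. Qed.

End WithA3.

Section PartA.
Variable A : pred nat.
Variable r : nat.
Hypothesis hr : 2 <= r.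
Hypothesis hpos : pos_seq A.

Definition k0 := r %/ 2.
Definition qq := r - k0.
Lemma k0_pos : 0 < k0. Proof. rewrite /k0; lia. Qed.
Lemma qq_pos : 0 < qq. Proof. rewrite /qq /k0; lia. Qed.

Definition WL Lp := sumn (filter A (iota 1 (2 ^ Lp))).

Definition covsum Lp H u :=
  sumn [seq cnt (Tj A qq j H u) (2 ^ (H + u)) * (WL Lp).+1 | j <- iota 0 qq].

Definition good Lp H u : Prop :=
  [/\ Lp < H, 0 < u, k0 * WL Lp + PW A H + 4 * k0 * 2 ^ H < k0 * 2 ^ (H + u).-1
    & covsum Lp H u < 2 ^ (H + u).-1].

Variable gs : nat -> nat * nat.
Hypothesis hgs : forall Lp, good Lp (gs Lp).1 (gs Lp).2.

Fixpoint scale k : nat * nat :=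
  if k is k'.+1 then gs ((scale k').1 + (scale k').2) else gs 0.

Definition Hs k := (scale k).1.
Definition us k := (scale k).2.
Definition Ls k := Hs k + us k.
Definition Lps k := if k is k'.+1 then Ls k' else 0.

Lemma good_k k : good (Lps k) (Hs k) (us k).
Proof. by case: k => [|k]; rewrite /Hs /us /=; apply: hgs. Qed.

Lemma Lps_Hs k : Lps k < Hs k. Proof. by case: (good_k k). Qed.
Lemma Hs_Ls k : Hs k < Ls k. Proof. case: (good_k k) => _ h _ _; rewrite /Ls; lia. Qed.
Lemma Lps_S k : Lps k.+1 = Ls k. Proof. by []. Qed.

Lemma Ls_Lps k k' : k < k' -> Ls k <= Lps k'.
Proof.
elim: k' => [|k' IH] //= hk.
case: (ltngtP k k') => h; try lia.
  have := IH h; have := Lps_Hs k'; have := Hs_Ls k'; lia.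
by subst.
Qed.

Lemma Hs_ge k : k <= Hs k.
Proof.
elim: k => [|k IH] //; have := Lps_Hs k.+1; rewrite Lps_S; have := Hs_Ls k; lia.
Qed.

Definition inTop a := has (fun k => (2 ^ Hs k < a) && (a <= 2 ^ Ls k)) (iota 0 a.+1).

Lemma inTopP a : reflect (exists k, 2 ^ Hs k < a <= 2 ^ Ls k) (inTop a).
Proof.
apply: (iffP hasP) => [[k _ /andP [h1 h2]]|[k /andP [h1 h2]]]; first by exists k; lia.
exists k; last by lia.
rewrite mem_iota; have := Hs_ge k; have := ltn_expl (Hs k) (isT : 1 < 2); lia.
Qed.

Definition col a := if inTop a then k0 + rank A a %% qq else rank A a %% k0.

Lemma col_lt a : col a < r.
Proof.
rewrite /col; case: inTop.
  have := ltn_pmod (rank A a) qq_pos; rewrite /qq /k0; lia.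
have := ltn_pmod (rank A a) k0_pos; rewrite /k0; lia.
Qed.

Definition colo a : 'I_r := Ordinal (col_lt a).

Lemma col_top k a : 2 ^ Hs k < a <= 2 ^ Ls k -> col a = k0 + rank A a %% qq.
Proof. by move=> h; rewrite /col (introT (inTopP a)) //; exists k. Qed.

Lemma col_win k a : 2 ^ Lps k < a <= 2 ^ Hs k -> col a = rank A a %% k0.
Proof.
move=> h; rewrite /col; case: (inTopP a) => // -[k' hk'].
exfalso.
case: (ltngtP k' k) => hkk.
- have := Ls_Lps hkk; move=> hl. have : 2 ^ Ls k' <= 2 ^ Lps k by rewrite leq_pexp2l.
  lia.
- have h1 := Ls_Lps hkk. have h2 := Lps_Hs k'. have h3 := Hs_Ls k.
  have : 2 ^ Hs k <= 2 ^ Hs k' by rewrite leq_pexp2l //; lia.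
  lia.
- subst; lia.
Qed.


Definition Cov Lp H u j :=
  flatten [seq iota x (WL Lp).+1 | x <- [seq x <- sums (Tj A qq j H u) | x <= 2 ^ (H + u)]].

Lemma size_Cov Lp H u j : size (Cov Lp H u j) = cnt (Tj A qq j H u) (2 ^ (H + u)) * (WL Lp).+1.
Proof.
rewrite /Cov /cnt size_flatten /shape -map_comp -size_filter.
elim: [seq x <- _ | _] => [|x s IH] //=. by rewrite size_iota IH mulSn.
Qed.

Lemma low_sum s Lp : uniq s -> all A s -> (forall a, a \in s -> 0 < a) ->
  sumn (filter (fun a => a <= 2 ^ Lp) s) <= WL Lp.
Proof.
move=> us /allP sA spos.
apply: sumn_sub; rewrite ?filter_uniq ?iota_uniq //.
move=> a; rewrite !mem_filter mem_iota => /andP [h1 h2].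
rewrite sA // /=. have := spos a h2; lia.
Qed.

Lemma ramsey_false : ramsey_complete r A -> False.
Proof.
move=> /(_ colo) [N HN].
set k := N.
set H := Hs k. set u := us k. set Lp := Lps k.
have [gLp gu gW gC] := good_k k.
rewrite -/H -/u -/Lp in gLp gu gW gC.
set Y := 2 ^ (H + u).-1.
have hY2 : 2 ^ (H + u) = Y + Y.
  by rewrite /Y addnn -mul2n -expnS prednK //; lia.
have hNY : N <= Y.
  have := Hs_ge k. rewrite -/H /Y => hk.
  have := ltn_expl (H + u).-1 (isT : 1 < 2). lia.
have cover : forall m, Y < m <= Y + Y -> has (fun j => m \in Cov Lp H u j) (iota 0 qq).
  move=> m /andP [m1 m2].
  have [i [s [us /allP sA sm]]] := HN m ltac:(lia).
  have sA' : forall a, a \in s -> A a /\ col a = i.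
    by move=> a /sA /andP [-> /eqP <-].
  have spos : forall a, a \in s -> 0 < a by move=> a /sA' [/hpos].
  have sle : forall a, a \in s -> a <= m by move=> a /mem_le_sumn; rewrite sm.
  have allA : all A s by apply/allP => a /sA' [].
  have hlow := low_sum Lp us allA spos.
  rewrite (sumn_split (fun a => a <= 2 ^ Lp)) in sm.
  case: (ltnP i k0) => hi.
    exfalso.
    set P := (fun a => A a && (rank A a %% k0 == i)).
    have hsub : sumn (filter (predC (fun a => a <= 2 ^ Lp)) s) <= sumn (filter P (iota 1 (2 ^ H))).
      apply: sumn_sub; rewrite ?filter_uniq ?iota_uniq //.
      move=> a; rewrite !mem_filter /= mem_iota => /andP [ha ains].
      have [hAa hca] := sA' a ains.
      have haH : a <= 2 ^ H.
        rewrite leqNgt; apply/negP => hH.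
        have := col_top (k := k) (a := a) ltac:(rewrite -/H /Ls -/H -/u; have := sle a ains; lia).
        lia.
      have hcw := col_win (k := k) (a := a) ltac:(rewrite -/H -/Lp; lia).
      rewrite /P hAa /= -hcw hca eqxx /=.
      have := spos a ains; lia.
    have hw := window_sum A i H k0_pos.
    rewrite -/P in hw.
    have h1 : k0 * m <= k0 * WL Lp + PW A H + 4 * k0 * 2 ^ H.
      rewrite -sm mulnDr -addnA; apply: leq_add; first by rewrite leq_mul2l hlow orbT.
      apply: leq_trans hw; by rewrite leq_mul2l hsub orbT.
    have h2 : k0 * Y < k0 * m by rewrite ltn_pmul2l // k0_pos.
    rewrite -/Y in gW. lia.
  have hj : i - k0 < qq by rewrite /qq; have := ltn_ord i; lia.
  apply/hasP; exists (i - k0); first by rewrite mem_iota; lia.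
  set hi_s := filter (predC (fun a => a <= 2 ^ Lp)) s.
  have hsub : {subset hi_s <= Tj A qq (i - k0) H u}.
    move=> a; rewrite mem_filter /= => /andP [ha ains].
    have [hAa hca] := sA' a ains.
    have haH : 2 ^ H < a.
      rewrite ltnNge; apply/negP => hH.
      have hcw := col_win (k := k) (a := a) ltac:(rewrite -/H -/Lp; lia).
      have := ltn_pmod (rank A a) k0_pos. lia.
    have hct := col_top (k := k) (a := a) ltac:(rewrite -/H /Ls -/H -/u; have := sle a ains; lia).
    rewrite mem_Tj hAa haH /=; apply/andP; split; first by have := sle a ains; lia.
    apply/eqP; lia.
  have hin := sumn_sub_sums (filter_uniq _ us) (uniq_Tj A qq (i - k0) H u) hsub.
  have hm : sumn hi_s <= m.
    have e : sumn [seq a <- s | a <= 2 ^ Lp] + sumn hi_s = m := sm. lia.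
  rewrite /Cov; apply/flattenP.
  exists (iota (sumn hi_s) (WL Lp).+1).
    apply/mapP; exists (sumn hi_s) => //; rewrite mem_filter hin andbT; lia.
  rewrite mem_iota.
  have e : sumn [seq a <- s | a <= 2 ^ Lp] + sumn hi_s = m := sm.
  move: e hlow; set lo := sumn _; lia.
have hsz : size (iota Y.+1 Y) <= size (flatten [seq Cov Lp H u j | j <- iota 0 qq]).
  apply: uniq_leq_size; first exact: iota_uniq.
  move=> m; rewrite mem_iota => hm.
  have /hasP [j hj hmj] := cover m ltac:(lia).
  by apply/flattenP; exists (Cov Lp H u j) => //; apply/mapP; exists j.
rewrite size_iota size_flatten /shape -map_comp in hsz.
have : sumn [seq (size \o Cov Lp H u) j | j <- iota 0 qq] = covsum Lp H u.
  by rewrite /covsum; congr sumn; apply: eq_map => j /=; rewrite size_Cov.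
move=> e.
have e2 : sumn [seq (size \o [eta Cov Lp H u]) i | i <- iota 0 qq] = covsum Lp H u := e.
rewrite e2 -/Y in hsz. rewrite -/Y in gC. lia.
Qed.

End PartA.
Lemma INR_expn2 n : INR (2 ^ n) = (2 ^ n)%R.
Proof.
elim: n => [|n IH]; first by rewrite expn0 /=.
by rewrite expnS mult_INR IH /= ; lra.
Qed.

Section RPart.
Local Open Scope R_scope.

Fixpoint sumR (F : nat -> R) (n : nat) : R :=
  match n with O => 0 | S n' => sumR F n' + F n' end.

Lemma sumR_peel F n : sumR F n.+1 = F O + sumR (fun i => F i.+1) n.
Proof.
elim: n => [|n IH]; first by rewrite /=; lra.
change (sumR F n.+2) with (sumR F n.+1 + F n.+1).
change (sumR (fun i => F i.+1) n.+1) with (sumR (fun i => F i.+1) n + F n.+1).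
rewrite IH; lra.
Qed.

Lemma sumR_ge0 F n : (forall i, 0 <= F i) -> 0 <= sumR F n.
Proof. move=> h; elim: n => [|n IH] /=; first lra. have := h n; lra. Qed.

Lemma sumR_le F G n : (forall i, (i < n)%nat -> F i <= G i) -> sumR F n <= sumR G n.
Proof.
elim: n => [|n IH] h /=; first lra.
have h1 := IH (fun i hi => h i (ltnW hi)). have h2 := h n (ltnSn n). lra.
Qed.

Lemma sumR_lt F G n : (0 < n)%nat -> (forall i, (i < n)%nat -> F i < G i) -> sumR F n < sumR G n.
Proof.
elim: n => [|n IH] // _ h /=.
have h2 := h n (ltnSn n).
case: n IH h h2 => [|n] IH h h2; first by rewrite /=; lra.
have h1 := IH isT (fun i hi => h i (ltnW hi)). lra.
Qed.

Lemma sumR_add F G n : sumR (fun i => F i + G i) n = sumR F n + sumR G n.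
Proof. elim: n => [|n IH] /=; first lra. rewrite IH; lra. Qed.

Lemma sumR_scal k F n : sumR (fun i => k * F i) n = k * sumR F n.
Proof. elim: n => [|n IH] /=; first lra. rewrite IH; lra. Qed.

Lemma sumR_mono_n F m n : (forall i, 0 <= F i) -> (m <= n)%nat -> sumR F m <= sumR F n.
Proof.
move=> h; elim: n => [|n IH] hmn.
  have e : m = O by lia.
  rewrite e; lra.
case: (ltnP m n.+1) => hm.
  have := IH (hm : (m <= n)%nat); have := h n; rewrite /=; lra.
have e : m = n.+1 by lia.
rewrite e; lra.
Qed.

Lemma sumR_shift F B n : (forall i, 0 <= F i) -> sumR (fun i => F (B + i)%nat) n <= sumR F (B + n).
Proof.
move=> h; elim: n => [|n IH] /=.
  rewrite addn0; exact: sumR_ge0.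
rewrite addnS /=; lra.
Qed.

Lemma sumR_const k n : sumR (fun _ => k) n = INR n * k.
Proof. elim: n => [|n IH] /=; first lra. rewrite IH; case: n {IH} => [|n]; rewrite /=; lra. Qed.

Lemma sumR_id B n : 2 * sumR (fun i => INR (B + i)) n = 2 * INR n * INR B + INR n * (INR n - 1).
Proof.
elim: n => [|n IH]; first by rewrite /=; lra.
change (sumR (fun i => INR (B + i)) n.+1) with (sumR (fun i => INR (B + i)) n + INR (B + n)).
rewrite Rmult_plus_distr_l IH plus_INR S_INR; lra.
Qed.

Lemma sumR_geom n : sumR (fun t => / 2 ^ t) n <= 2.
Proof.
suff h : sumR (fun t => / 2 ^ t) n = 2 - 2 * / 2 ^ n.
  rewrite h. have : 0 < / 2 ^ n by apply: Rinv_0_lt_compat; apply: pow_lt; lra. lra.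
elim: n => [|n IH] /=; first lra.
rewrite IH. field. apply: pow_nonzero; lra.
Qed.

End RPart.

Section RPart2.
Local Open Scope R_scope.
Variable A : pred nat.

Definition Pr H := INR (PW A H) / 2 ^ H.
Definition Qr N H := sumR (fun t => INR (dA A (H + t).+1) / 2 ^ t) (N - H).

Lemma sumR_ext F G n : (forall i, F i = G i) -> sumR F n = sumR G n.
Proof. move=> h; elim: n => [|n IH] //=; by rewrite IH h. Qed.

Lemma PW_S H : PW A H.+1 = (PW A H + dA A H.+1 * 2 ^ H.+1)%nat.
Proof. by rewrite /PW big_ord_recr. Qed.

Lemma pow2_pos n : 0 < 2 ^ n.
Proof. apply: pow_lt; lra. Qed.

Lemma Pr_S H : Pr H.+1 = Pr H / 2 + INR (dA A H.+1).
Proof.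
rewrite /Pr PW_S plus_INR mult_INR INR_expn2 /=.
field. apply: pow_nonzero; lra.
Qed.

Lemma Pr_ge0 H : 0 <= Pr H.
Proof. rewrite /Pr; apply: Rmult_le_pos; [exact: pos_INR|]. apply/Rlt_le/Rinv_0_lt_compat/pow2_pos. Qed.

Lemma T1 n : sumR Pr n.+1 + Pr n <= 2 * INR (fA A n).
Proof.
elim: n => [|n IH].
  rewrite /= /Pr /PW big_ord1 /= expn0 muln1 fA_0; lra.
change (sumR Pr n.+2) with (sumR Pr n.+1 + Pr n.+1).
rewrite Pr_S fA_S plus_INR; lra.
Qed.

Lemma Qr_ge0 N H : 0 <= Qr N H.
Proof.
apply: sumR_ge0 => t; apply: Rmult_le_pos; [exact: pos_INR|].
apply/Rlt_le/Rinv_0_lt_compat/pow2_pos.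
Qed.

Lemma Qr_NN N : Qr N N = 0.
Proof. by rewrite /Qr subnn. Qed.

Lemma Qr_S N H : (H < N)%nat -> Qr N H = INR (dA A H.+1) + Qr N H.+1 / 2.
Proof.
move=> hH; rewrite /Qr.
have -> : (N - H = (N - H.+1).+1)%nat by lia.
rewrite sumR_peel addn0 /= Rdiv_1_r.
congr (_ + _).
rewrite /Rdiv Rmult_comm -sumR_scal.
apply: sumR_ext => i. rewrite addnS -addSn /=. field. apply: pow_nonzero; lra.
Qed.

Lemma T2 N k : (k <= N)%nat ->
  sumR (fun i => Qr N (N - k + i)) k.+1 + Qr N (N - k) <= 2 * (INR (fA A N) - INR (fA A (N - k))).
Proof.
elim: k => [|k IH] hk.
  rewrite /= subn0 addn0 Qr_NN; lra.
set h := (N - k.+1)%nat.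
have hh : (N - k = h.+1)%nat by rewrite /h; lia.
rewrite sumR_peel addn0.
have -> : sumR (fun i => Qr N (h + i.+1)) k.+1 = sumR (fun i => Qr N (N - k + i)) k.+1.
  by apply: sumR_ext => i; rewrite hh addnS.
have IH' := IH (ltnW hk). rewrite hh in IH'.
rewrite (Qr_S (H := h)) ?hh; last by rewrite /h; lia.
rewrite fA_S plus_INR in IH'. lra.
Qed.

End RPart2.

Section Markov.
Local Open Scope R_scope.
Variable A : pred nat.
Variable c : R.
Hypothesis hc : 0 < c.
Variable x0 : nat.
Hypothesis hf : forall x, (x0 <= x)%nat -> INR (fA A x) <= c * INR x ^ 2.

Lemma markov B : (x0 <= B)%nat -> (1 <= B)%nat ->
  exists H, [/\ (B <= H)%nat, (H <= 4 * B)%nat, Pr A H <= 9 * c * INR H & Qr A (6 * B) H <= 20 * c * INR H].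
Proof.
move=> hB hB1.
apply: NNPP => hno.
set n := (3 * B).+1.
have hlt : sumR (fun i => c * INR (B + i)) n <
           sumR (fun i => / 9 * Pr A (B + i) + / 20 * Qr A (6 * B) (B + i)) n.
  apply: sumR_lt => // i hi.
  have hP := Pr_ge0 A (B + i). have hQ := Qr_ge0 A (6 * B) (B + i).
  case: (Rle_lt_dec (Pr A (B + i)) (9 * c * INR (B + i))) => h1.
    case: (Rle_lt_dec (Qr A (6 * B) (B + i)) (20 * c * INR (B + i))) => h2.
      exfalso; apply: hno; exists (B + i)%nat; split => //; [lia|rewrite /n in hi; lia].
    lra.
  lra.
rewrite sumR_add (sumR_scal (/ 9) (fun i => Pr A (B + i))) (sumR_scal (/ 20) (fun i => Qr A (6 * B) (B + i)))
  (sumR_scal c (fun i => INR (B + i))) in hlt.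
have s1 : sumR (fun i => Pr A (B + i)) n <= 2 * INR (fA A (4 * B)).
  apply: (Rle_trans _ _ _ (@sumR_shift (Pr A) B n (Pr_ge0 A))).
  have := T1 A (4 * B).
  have -> : (B + n = (4 * B).+1)%nat by rewrite /n; lia.
  have := Pr_ge0 A (4 * B); lra.
have s2 : sumR (fun i => Qr A (6 * B) (B + i)) n <= 2 * INR (fA A (6 * B)).
  apply: (Rle_trans _ _ _ (@sumR_shift (Qr A (6 * B)) B n (Qr_ge0 A (6 * B)))).
  apply: (Rle_trans _ (sumR (Qr A (6 * B)) (6 * B).+1)).
    apply: sumR_mono_n; [exact: Qr_ge0| rewrite /n; lia].
  have := T2 A (leqnn (6 * B)).
  rewrite subnn.
  have -> : sumR (fun i => Qr A (6 * B) (0 + i)) (6 * B).+1 = sumR (Qr A (6 * B)) (6 * B).+1.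
    by apply: sumR_ext => i; rewrite add0n.
  have := Qr_ge0 A (6 * B) 0. have := pos_INR (fA A 0). lra.
have f4 := hf (x := (4 * B)%nat) ltac:(lia).
have f6 := hf (x := (6 * B)%nat) ltac:(lia).
have sid := sumR_id B n.
have hn : INR n = 3 * INR B + 1 by rewrite /n S_INR mult_INR /=; lra.
rewrite !mult_INR /= in f4 f6.
have hb : 1 <= INR B by apply: (le_INR 1); apply/leP.
set b := INR B in f4 f6 sid hb hlt hn.
set T := sumR (fun i => INR (B + i)) n in sid hlt.
rewrite hn in sid.
have hT : T = 15 / 2 * (b * b) + 5 / 2 * b by nra.
rewrite hT in hlt.
have hcb : 0 < c * (b * b) by apply: Rmult_lt_0_compat; [|apply: Rmult_lt_0_compat]; lra.
have hcb1 : 0 < c * b by apply: Rmult_lt_0_compat; lra.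
have e4 : c * (4 * b * (4 * b * 1)) = 16 * (c * (b * b)) by ring.
have e6 : c * (6 * b * (6 * b * 1)) = 36 * (c * (b * b)) by ring.
have e1 : c * (15 / 2 * (b * b) + 5 / 2 * b) = 15 / 2 * (c * (b * b)) + 5 / 2 * (c * b) by ring.
have e4' : (1 + 1 + 1 + 1) = 4 by lra. have e6' : (1 + 1 + 1 + 1 + 1 + 1) = 6 by lra.
rewrite e4' in f4. rewrite e6' in f6.
rewrite e4 in f4. rewrite e6 in f6. rewrite e1 in hlt.
lra.
Qed.

End Markov.



Lemma pow4_big n : 4 * (n + 3) + 20 < 2 ^ (2 * (n + 3)).
Proof.
elim: n => [|n IH]; first by [].
have -> : 2 * (n.+1 + 3) = (2 * (n + 3)).+2 by lia.
rewrite !expnS; lia.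
Qed.

Lemma WL_le A Lp : WL A Lp <= 2 ^ (2 * Lp).
Proof.
rewrite /WL.
have h := @sumn_filter_bound A (iota 1 (2 ^ Lp)) (2 ^ Lp) ltac:(apply/allP => a; rewrite mem_iota; lia).
apply: (leq_trans h).
have : count A (iota 1 (2 ^ Lp)) <= 2 ^ Lp.
  by have := count_size A (iota 1 (2 ^ Lp)); rewrite size_iota.
rewrite mul2n -addnn expnD; nia.
Qed.

Lemma INR_div_le a b : (0 < b)%nat -> (INR (a %/ b) <= INR a / INR b)%R.
Proof.
move=> b0.
have h : (a %/ b * b <= a)%nat := leq_divM a b.
have hb : (0 < INR b)%R by apply: lt_0_INR; apply/ltP.
apply: (Rmult_le_reg_r (INR b)) => //.
rewrite /Rdiv Rmult_assoc Rinv_l ?Rmult_1_r; last lra.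
rewrite -mult_INR; apply: le_INR; exact/leP.
Qed.

Lemma Ep_R A q j H u :
  (INR (Ep A q j H u) <= sumR (fun t => INR (size (Tl A q j H t)) / 2 ^ t) u + INR u)%R.
Proof.
elim: u => [|u IH]; first by rewrite /=; lra.
change (Ep A q j H u.+1) with (Ep A q j H u + (size (Tl A q j H u) %/ 2 ^ u + 1))%nat.
change (sumR (fun t => INR (size (Tl A q j H t)) / 2 ^ t)%R u.+1) with
  (sumR (fun t => INR (size (Tl A q j H t)) / 2 ^ t) u + INR (size (Tl A q j H u)) / 2 ^ u)%R.
rewrite !plus_INR S_INR.
have := @INR_div_le (size (Tl A q j H u)) (2 ^ u) (expn_gt0 _ _).
rewrite INR_expn2. have e0 : INR 0 = 0%R by []. have e2 := S_INR u. lra.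
Qed.

Lemma sumn_map_le (F : nat -> nat) s M : (forall j, F j <= M) -> sumn (map F s) <= size s * M.
Proof. move=> h; elim: s => [|x s IH] //=; have := h x; lia. Qed.

Lemma exists_good A r (hr : 2 <= r) x0
  (hf : forall x, x0 <= x -> (INR (fA A x) <= (INR r - 1) / 140 * INR x ^ 2)%R) Lp :
  exists H u, good A r Lp H u.
Proof.
set c := ((INR r - 1) / 140)%R.
have hr2 : (2 <= INR r)%R by apply: (le_INR 2); apply/leP.
have hc : (0 < c)%R by rewrite /c; lra.
set B := (x0 + 5 * (r + 2 * Lp + 27)).+1.
have [H [hBH hH4 hP hQ]] := @markov A c hc x0 hf B ltac:(rewrite /B; lia) ltac:(rewrite /B; lia).
set K := k0 r.
have hK : 0 < K by rewrite /K /k0; lia.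
have hcK : (c <= INR K / 70)%R.
  have : (r - 1 <= 2 * K)%nat by rewrite /K /k0; lia.
  move/leP/le_INR; rewrite minus_INR ?mult_INR /=; last by apply/leP; lia.
  rewrite /c; lra.
set Q := qq r.
have hQ0 : 0 < Q by rewrite /Q /qq /k0; lia.
have hcQ : (c <= INR Q / 70)%R.
  have : (r - 1 <= 2 * Q)%nat by rewrite /Q /qq /k0; lia.
  move/leP/le_INR; rewrite minus_INR ?mult_INR /=; last by apply/leP; lia.
  rewrite /c; lra.
have hQr : Q <= r by rewrite /Q /qq; lia.
set S' := K * WL A Lp + PW A H + 4 * K * 2 ^ H.
have pex : exists u, S' < K * 2 ^ (H + u).-1.
  exists S'.+1. rewrite addnS /=.
  have : S' < 2 ^ S' := ltn_expl S' (isT : 1 < 2).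
  have : 2 ^ S' <= 2 ^ (H + S') by rewrite leq_pexp2l // leq_addl.
  nia.
case: (ex_minnP pex) => u hu hmin.
have hu3 : 3 <= u.
  rewrite leqNgt; apply/negP => hu2.
  have : 2 ^ (H + u).-1 <= 2 ^ H.+1 by rewrite leq_pexp2l //; lia.
  rewrite expnS. nia.
have hnot : K * 2 ^ (H + (u - 2)) <= S'.
  rewrite leqNgt; apply/negP => hlt.
  have := hmin (u - 1) ltac:(have -> : (H + (u - 1)).-1 = H + (u - 2) by lia). lia.
have hWL : WL A Lp <= 2 ^ H.
  apply: (leq_trans (WL_le A Lp)); rewrite leq_pexp2l //; rewrite /B in hBH; lia.
have hU : (2 ^ u <= 20 + 36 / 70 * INR H)%R.
  move/leP/le_INR: hnot; rewrite /S' !plus_INR !mult_INR !INR_expn2 /=.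
  have hPW : INR (PW A H) = (Pr A H * 2 ^ H)%R.
    rewrite /Pr; field; apply: pow_nonzero; lra.
  rewrite hPW.
  have hW := hWL. move/leP/le_INR: hW; rewrite INR_expn2 => hW.
  have hX : (0 < 2 ^ H)%R by apply: pow_lt; lra.
  have hKR : (1 <= INR K)%R by apply: (le_INR 1); apply/leP.
  have e : (2 ^ (H + (u - 2)) = 2 ^ H * 2 ^ u / 4)%R.
    have -> : u = ((u - 2) + 2)%nat by lia.
    rewrite pow_add pow_add /=. have -> : (u - 2 + 2 - 2 = u - 2)%nat by lia. field.
  rewrite e.
  have hHR : (0 <= INR H)%R by apply: pos_INR.
  set X := (2 ^ H)%R in hX hW e *. set U := (2 ^ u)%R in e *.
  set W := INR (WL A Lp) in hW *. set P := Pr A H in hP *. set k := INR K in hKR hcK *.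
  move=> h.
  apply: Rnot_lt_le => hcon.
  have hPX : (P * X <= 9 * (k / 70) * INR H * X)%R.
    apply: Rmult_le_compat_r; first lra.
    apply: (Rle_trans _ _ _ hP). apply: Rmult_le_compat_r => //. lra.
  have hkW : (k * W <= k * X)%R by apply: Rmult_le_compat_l; lra.
  have hpos : (0 < k * X * (U / 4 - 5 - 9 / 70 * INR H))%R.
    apply: Rmult_lt_0_compat; [apply: Rmult_lt_0_compat|]; lra.
  nra.
have hu2B : u < 2 * B.
  have h1 : 2 ^ u <= 20 + H.
    apply/leP/INR_le. rewrite INR_expn2 plus_INR.
    have : (0 <= INR H)%R by apply: pos_INR. have e20 : INR 20 = 20%R by rewrite /=; lra. lra.
  have h2 := pow4_big (B - 3).
  have e3 : B - 3 + 3 = B by rewrite /B; lia.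
  rewrite e3 in h2.
  have h3 : 2 ^ u < 2 ^ (2 * B) by lia.
  by rewrite ltn_exp2l in h3.
have hHu : H + u <= 6 * B by lia.
have hE : forall j, 2 ^ u + Ep A Q j H u <= H + u - (r + 2 * Lp + 3).
  move=> j.
  have hEp := Ep_R A Q j H u.
  have hterm : forall t, (INR (size (Tl A Q j H t)) / 2 ^ t <=
      / INR Q * (INR (dA A (H + t).+1) / 2 ^ t) + 2 * / 2 ^ t)%R.
    move=> t.
    have hs := size_Tl A j H t hQ0.
    move/leP/le_INR: hs; rewrite plus_INR !mult_INR => hs.
    have hQR : (0 < INR Q)%R by apply: lt_0_INR; apply/ltP.
    have ht : (0 < 2 ^ t)%R by apply: pow_lt; lra.
    have : (INR (size (Tl A Q j H t)) <= INR (dA A (H + t).+1) / INR Q + 2)%R.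
      apply: (Rmult_le_reg_l (INR Q)) => //.
      have -> : (INR Q * (INR (dA A (H + t).+1) / INR Q + 2) = INR (dA A (H + t).+1) + 2 * INR Q)%R.
        by field; lra.
      have e2 : INR 2 = 2%R by []. rewrite e2 in hs. lra.
    move=> hh.
    have -> : (/ INR Q * (INR (dA A (H + t).+1) / 2 ^ t) + 2 * / 2 ^ t =
               (INR (dA A (H + t).+1) / INR Q + 2) / 2 ^ t)%R by field; lra.
    apply: Rmult_le_compat_r; last exact: hh.
    apply/Rlt_le/Rinv_0_lt_compat; lra.
  have hs1 := @sumR_le _ _ u (fun t _ => hterm t).
  rewrite sumR_add (sumR_scal (/ INR Q)%R (fun t => INR (dA A (H + t).+1) / 2 ^ t)%R)
                   (sumR_scal 2%R (fun t => / 2 ^ t)%R) in hs1.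
  have hgeo := sumR_geom u.
  have hQq : (sumR (fun t => INR (dA A (H + t).+1) / 2 ^ t) u <= Qr A (6 * B) H)%R.
    apply: sumR_mono_n; last by lia.
    move=> t; apply: Rmult_le_pos; [exact: pos_INR|]. apply/Rlt_le/Rinv_0_lt_compat/pow_lt; lra.
  have hQR : (0 < INR Q)%R by apply: lt_0_INR; apply/ltP.
  have hq2 : (/ INR Q * Qr A (6 * B) H <= 20 / 70 * INR H)%R.
    apply: (Rmult_le_reg_l (INR Q)) => //.
    rewrite -Rmult_assoc Rinv_r; last lra.
    have : (20 * c * INR H <= 20 * (INR Q / 70) * INR H)%R.
      apply: Rmult_le_compat_r; [exact: pos_INR|lra].
    lra.
  have hq3 : (/ INR Q * sumR (fun t => INR (dA A (H + t).+1) / 2 ^ t) u <= / INR Q * Qr A (6 * B) H)%R.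
    apply: Rmult_le_compat_l => //; apply/Rlt_le/Rinv_0_lt_compat; lra.
  have hBig : (5 * (INR r + 2 * INR Lp + 27) <= INR H)%R.
    have : 5 * (r + 2 * Lp + 27) <= H by rewrite /B in hBH; lia.
    move/leP/le_INR; rewrite -!multE -!plusE !mult_INR !plus_INR.
    have e5 : INR 5 = 5%R by rewrite /=; lra. have e0 : INR 0 = 0%R by []. have e27 : INR 27 = 27%R by rewrite /=; lra.
    rewrite e5 e0 e27; lra.
  apply/leP/INR_le.
  rewrite minus_INR; last by apply/leP; rewrite /B in hBH; lia.
  rewrite -!plusE !plus_INR INR_expn2.
  have e0 : INR 0 = 0%R by []. have e3 : INR 3 = 3%R by rewrite /=; lra.
  rewrite e0 e3. lra.
exists H, u; split.
- rewrite /B in hBH; lia.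
- lia.
- exact: hu.
set Em := H + u - (r + 2 * Lp + 3).
have hterm : forall j, cnt (Tj A (qq r) j H u) (2 ^ (H + u)) * (WL A Lp).+1 <= 2 ^ Em * (WL A Lp).+1.
  move=> j; rewrite leq_mul2r; apply/orP; right.
  apply: (leq_trans (cnt_Tj A (qq r) j H u)). rewrite leq_pexp2l //.
have hs := sumn_map_le (iota 0 (qq r)) hterm.
rewrite size_iota in hs.
have hWL2 : (WL A Lp).+1 <= 2 ^ (2 * Lp + 1).
  have := WL_le A Lp. rewrite expnD expn1. have := expn_gt0 2 (2 * Lp). lia.
have hr2' : qq r <= 2 ^ r by apply: (leq_trans hQr); apply: ltnW; apply: ltn_expl.
have hfin : qq r * (2 ^ Em * (WL A Lp).+1) <= 2 ^ (r + Em + (2 * Lp + 1)).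
  have h1 := leq_mul hr2' (leq_mul (leqnn (2 ^ Em)) hWL2).
  apply: (leq_trans h1). by rewrite -!expnD addnA.
have hexp : r + Em + (2 * Lp + 1) < (H + u).-1.
  rewrite /Em; rewrite /B in hBH; lia.
rewrite /covsum.
apply: (leq_ltn_trans hs).
apply: (leq_ltn_trans hfin).
by rewrite ltn_exp2l.
Qed.



Lemma log2_pow x : log2 (INR (2 ^ x)) = INR x.
Proof.
rewrite /log2 INR_expn2 ln_pow; last lra.
have : (0 < ln 2)%R by rewrite -ln_1; apply: ln_increasing; lra.
move=> h; field; lra.
Qed.

Theorem theorem3p5 (r : nat) (A : pred nat) :
  2 <= r ->
  pos_seq A ->
  (exists N : nat, forall n : nat, N <= n ->
     (INR (counting A n) <= (INR r - 1) / 140 * (log2 (INR n)) ^ 2)%R) ->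
  ~ ramsey_complete r A.
Proof.
move=> hr hpos [N0 hN] hram.
have hf : forall x, N0 <= x -> (INR (fA A x) <= (INR r - 1) / 140 * INR x ^ 2)%R.
  move=> x hx.
  have := hN (2 ^ x) ltac:(have := ltn_expl x (isT : 1 < 2); lia).
  by rewrite log2_pow.
have gsex : forall Lp, {p : nat * nat | good A r Lp p.1 p.2}.
  move=> Lp; apply: constructive_indefinite_description.
  have [H [u hg]] := exists_good hr hf Lp.
  by exists (H, u).
exact: (@ramsey_false A r hr hpos (fun Lp => sval (gsex Lp)) (fun Lp => svalP (gsex Lp)) hram).
Qed.
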